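(* Fix $y_0\in Y$. (a) A pair $(\bar\psi,\bar\eta)\in C(Y)\times C(Y)$ is an optimal solution of the dual problem if and only if both of the following hold: - $\bar\psi(f(y,u))-\bar\psi(y)\ge0$ for all $(y,u)\in G$; - $\min_{(y,u)\in G}\{k(y,u)-\bar\psi(y)+\bar\eta(f(y,u))-\bar\eta(y)\}=V(y_0)-\bar\psi(y_0)$. (b) If $\bar\eta\in C(Y)$ satisfies $\min_{(y,u)\in G}\{k(y,u)-V(y)+\bar\eta(f(y,u))-\bar\eta(y)\}=0$, then the pair $(V,\bar\eta)$ is an optimal solution of the dual problem.
   Context: Let $Y\subset\mathbb{R}^m$ be nonempty compact, $U_0$ a compact metric space, $U(\cdot):Y\rightsquigarrow U_0$ upper semicontinuous and compact-valued, and $f:\mathbb{R}^m\times U_0\to\mathbb{R}^m$, $k:\mathbb{R}^m\times U_0\to\mathbb{R}$ continuous. Put $A(y):=\{u\in U(y): f(y,u)\in Y\}$ and $G:=\{(y,u):y\in Y,\ u\in A(y)\}$. Standing assumption: $A(y)\ne\emptyset$ for all $y\in Y$. For $y_0\in Y$, let $\mathcal U_T(y_0)$ be the set of controls $u(0),\dots,u(T-1)$ with $u(t)\in A(y(t))$, where $y(0)=y_0$ and $y(t+1)=f(y(t),u(t))$. Define $V_T(y_0):=\frac1T\min_{u\in\mathcal U_T(y_0)}\sum_{t=0}^{T-1}k(y(t),u(t))$. Standing assumption of this result: for every $y\in Y$ the limit $V(y):=\lim_{T\to\infty}V_T(y)$ exists, and $V$ is continuous on $Y$. Dual problem: $d^*(y_0):=\sup\mu$,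 where the supremum is over triples $(\mu,\psi,\eta)\in\mathbb{R}\times C(Y)\times C(Y)$ with, for all $(y,u)\in G$: $$k(y,u)+\psi(y_0)-\psi(y)+\eta(f(y,u))-\eta(y)-\mu\ge0,\qquad\psi(f(y,u))-\psi(y)\ge0.$$ A pair $(\bar\psi,\bar\eta)\in C(Y)\times C(Y)$ is called an optimal solution of the dual problem if for all $(y,u)\in G$: $$k(y,u)+\bar\psi(y_0)-\bar\psi(y)+\bar\eta(f(y,u))-\bar\eta(y)\ge d^*(y_0),\qquad\bar\psi(f(y,u))-\bar\psi(y)\ge0.$$ *)

(* Defs.v *)
From HB Require Import structures.
From mathcomp Require Import all_boot all_order all_algebra.
From mathcomp Require Import all_classical all_reals all_analysis.
Set Implicit Arguments. Unset Strict Implicit. Unset Printing Implicit Defensive.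
Import Order.TTheory GRing.Theory Num.Theory.
Import numFieldNormedType.Exports.
Local Open Scope classical_set_scope.
Local Open Scope ring_scope.

Section Defs.
Variables (R : realType) (m : nat) (U0 : pseudoMetricType R).
Variables (Y : set 'rV[R]_m) (U : 'rV[R]_m -> set U0)
          (f : 'rV[R]_m -> U0 -> 'rV[R]_m) (k : 'rV[R]_m -> U0 -> R).

Definition usc_on : Prop :=
  forall y, Y y -> forall O : set U0, open O -> U y `<=` O ->
    \forall y' \near y, Y y' -> U y' `<=` O.

Definition Aset (y : 'rV[R]_m) : set U0 := [set u | U y u /\ Y (f y u)].

Definition Gset : set ('rV[R]_m * U0) := [set p | Y p.1 /\ Aset p.1 p.2].

Fixpoint traj (y0 : 'rV[R]_m) (u : nat -> U0) (t : nat) : 'rV[R]_m :=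
  match t with 0 => y0 | t'.+1 => f (traj y0 u t') (u t') end.

Definition admissible (T : nat) (y0 : 'rV[R]_m) (u : nat -> U0) : Prop :=
  forall t, (t < T)%N -> Aset (traj y0 u t) (u t).

(* V_T(y0) = (1/T) min_{u admissible} sum_{t<T} k(y(t),u(t))  (the min is
   attained under the standing hypotheses; written as inf) *)
Definition VT (T : nat) (y0 : 'rV[R]_m) : R :=
  (T%:R)^-1 * inf [set \sum_(t < T) k (traj y0 u t) (u t) | u in admissible T y0].

Definition dual_feasible (y0 : 'rV[R]_m) (mu : R) (psi eta : 'rV[R]_m -> R) : Prop :=
  {within Y, continuous psi} /\ {within Y, continuous eta} /\
  forall p, Gset p ->
    0 <= k p.1 p.2 + psi y0 - psi p.1 + eta (f p.1 p.2) - eta p.1 - mu /\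
    0 <= psi (f p.1 p.2) - psi p.1.

Definition dstar (y0 : 'rV[R]_m) : \bar R :=
  ereal_sup [set mu%:E | mu in [set mu | exists psi eta, dual_feasible y0 mu psi eta]].

Definition dual_optimal (y0 : 'rV[R]_m) (psi eta : 'rV[R]_m -> R) : Prop :=
  forall p, Gset p ->
    (dstar y0 <= (k p.1 p.2 + psi y0 - psi p.1 + eta (f p.1 p.2) - eta p.1)%:E)%E /\
    0 <= psi (f p.1 p.2) - psi p.1.

End Defs.

Definition is_min_on {T} {R : realType} (S : set T) (g : T -> R) (v : R) : Prop :=
  (exists2 p, S p & g p = v) /\ (forall p, S p -> v <= g p).

(* Main.v *)
Require Import Defs.
From HB Require Import structures.
From mathcomp Require Import all_boot all_order all_algebra.
From mathcomp Require Import all_classical all_reals all_analysis.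
From mathcomp Require Import zify ring lra.
Import Order.TTheory GRing.Theory Num.Theory.
Import numFieldNormedType.Exports.
Local Open Scope classical_set_scope.
Local Open Scope ring_scope.
Set Implicit Arguments.
Unset Strict Implicit.

Lemma bnd_within {T : topologicalType} (R : realType) (A : set T) (g : T -> R) :
  compact A -> {within A, continuous g} -> exists M, forall x, A x -> `|g x| <= M.
Proof.
move=> cA cg; have /compact_bounded := continuous_compact cg cA.
move=> [M [_ HM]]; exists (M + 1) => x Ax.
by apply: (HM (M + 1)); [rewrite ltrDl ltr01 | exists x].
Qed.

Lemma lip_cont (R : realType) (W : normedModType R) (g : W -> R) (L : R) :
  0 <= L -> (forall x y, g x <= g y + L * `|x - y|) -> continuous g.
Proof.
move=> L0 gl y; apply/cvgrPdist_lt => e e0.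
have e1 : 0 < e / (L + 1) by rewrite divr_gt0 //; lra.
near=> z.
have hz : `|y - z| < e / (L + 1) by near: z; exact: cvgr_dist_lt.
have h1 := gl y z; have h2 := gl z y.
rewrite distrC in h2.
have : L * `|y - z| < e.
  apply: (@le_lt_trans _ _ ((L + 1) * `|y - z|)); first by rewrite ler_wpM2r //; lra.
  by rewrite mulrC -ltr_pdivlMr //; lra.
rewrite ltr_norml; lra.
Unshelve. all: by end_near.
Qed.

Lemma sum_split (R : realType) (F : nat -> R) s n :
  \sum_(t < s + n) F t = \sum_(t < s) F t + \sum_(t < n) F (s + t)%N.
Proof.
elim: n => [|n IH]; first by rewrite addn0 big_ord0 addr0.
by rewrite addnS !big_ord_recr /= IH addrA.
Qed.

Lemma cvg_eps (R : realType) (u : nat -> R) l : u @ \oo --> l ->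
  forall e, 0 < e -> exists N, forall n, (N <= n)%N -> `|l - u n| < e.
Proof.
move=> /cvgrPdist_lt H e e0; have [N _ HN] := H e e0.
by exists N => n Nn; exact: HN.
Qed.

Lemma archi_ex (R : realType) (x : R) : exists N, forall n, (N <= n)%N -> x < n%:R.
Proof.
exists (Num.Def.archi_bound `|x|) => n Nn.
apply: (le_lt_trans (ler_norm x)); apply: (lt_le_trans (archi_boundP (normr_ge0 x))).
by rewrite ler_nat.
Qed.

Lemma nbhs_ballN (R : realType) (W : normedModType R) (y : W) th :
  0 < th -> nbhs y [set z | `|y - z| < th].
Proof. by move=> th0; exact: (@cvgr_dist_lt _ _ _ (nbhs y) _ id y cvg_id th th0). Qed.

Lemma cluster_le (R : realType) (X : topologicalType) (s : nat -> X) (q : X)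
  (h : X -> R) (Pp : X -> Prop) a :
  cluster (s @ \oo) q ->
  (forall th, 0 < th -> nbhs q [set x | Pp x -> h q <= h x + th]) ->
  (forall th, 0 < th -> \forall n \near \oo, Pp (s n) /\ h (s n) <= a + th) ->
  h q <= a.
Proof.
move=> clq h1 h2; apply/ler_addgt0Pr => th th0.
have th2 : 0 < th / 2 by rewrite divr_gt0.
have [x [[Px hx] hb]] := clq [set x | Pp x /\ h x <= a + th / 2] _ (h2 _ th2) (h1 _ th2).
have := hb Px; have : th / 2 + th / 2 = th by rewrite -splitr.
lra.
Qed.

Lemma inv_small (R : realType) (th : R) : 0 < th -> exists N, forall n, (N <= n)%N -> n.+1%:R^-1 <= th.
Proof.
move=> th0; have [N HN] := archi_ex th^-1; exists N => n Nn.
have := HN n Nn => h.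
rewrite -(invrK th) lef_pV2 ?posrE ?invr_gt0 //.
by apply: ltW; apply: (lt_le_trans h); rewrite ler_nat.
Qed.

Lemma max_idx (R : realType) (S : nat -> R) N :
  exists j0, (j0 <= N)%N /\ forall j, (j <= N)%N -> S j <= S j0.
Proof.
elim: N => [|N [j0 [j0N H]]]; first by exists 0%N; split => // j; rewrite leqn0 => /eqP ->.
case: (lerP (S j0) (S N.+1)) => h.
  exists N.+1; split => // j; rewrite leq_eqVlt => /orP[/eqP -> //|].
  by rewrite ltnS => /H /le_trans; apply.
exists j0; split; first exact: leqW.
by move=> j; rewrite leq_eqVlt => /orP[/eqP -> |]; [exact: ltW | rewrite ltnS; exact: H].
Qed.

Section Prop44.
Variables (R : realType) (m : nat) (U0 : pseudoMetricType R).
Variables (Y : set 'rV[R]_m) (U : 'rV[R]_m -> set U0)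
  (f : 'rV[R]_m -> U0 -> 'rV[R]_m) (k : 'rV[R]_m -> U0 -> R).
Hypothesis hA : forall y, Y y -> Aset Y U f y !=set0.
Hypothesis hY0 : Y !=set0.

Local Notation traj := (traj f).
Local Notation adm := (admissible Y U f).

Lemma choiceA : exists a : 'rV[R]_m -> U0, forall y, Y y -> Aset Y U f y (a y).
Proof.
have [y1 Yy1] := hY0; have [u1 _] := hA Yy1.
have H : forall y, exists u, Y y -> Aset Y U f y u.
  move=> y; case: (pselect (Y y)) => Yy; last by exists u1.
  by have [u Hu] := hA Yy; exists u.
by have [a Ha] := choice H; exists a.
Qed.

Lemma traj0 y u : traj y u 0 = y. Proof. by []. Qed.
Lemma trajS y u t : traj y u t.+1 = f (traj y u t) (u t). Proof. by []. Qed.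

Lemma traj_shift y u t : traj (f y (u 0%N)) (fun t => u t.+1) t = traj y u t.+1.
Proof. by elim: t => [//|t IH]; rewrite !trajS IH. Qed.

Definition ucons (a : U0) (u : nat -> U0) : nat -> U0 :=
  fun t => if t is t'.+1 then u t' else a.

Lemma traj_cons y a u t : traj y (ucons a u) t.+1 = traj (f y a) u t.
Proof. by elim: t => [//|t IH]; rewrite trajS IH. Qed.

Lemma exists_path y : Y y -> exists u : nat -> U0,
  forall t, Y (traj y u t) /\ Aset Y U f (traj y u t) (u t).
Proof.
move=> Yy; have [a Ha] := choiceA.
pose z t := iter t (fun x => f x (a x)) y.
exists (fun t => a (z t)).
have Ez t : traj y (fun t => a (z t)) t = z t.
  by elim: t => [//|t IH]; rewrite trajS IH.
have Yz t : Y (z t).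
  elim: t => [//|t IH]; rewrite /z iterS -/(z t).
  by have [_ ] := Ha _ IH.
by move=> t; rewrite Ez; split; [exact: Yz | exact: Ha].
Qed.

Lemma adm_Y T y u : Y y -> adm T y u -> forall t, (t <= T)%N -> Y (traj y u t).
Proof.
move=> Yy ad; elim => [//|t IH] tT.
by have [_ ] := ad t tT.
Qed.

Hypothesis hYc : compact Y.
Hypothesis hUc : compact [set: U0].
Hypothesis hk : continuous (fun p : 'rV[R]_m * U0 => k p.1 p.2).

Lemma kbound : exists K : R, 0 <= K /\ forall y a, Y y -> `|k y a| <= K.
Proof.
have cs : {within Y `*` [set: U0], continuous (fun p : 'rV[R]_m * U0 => k p.1 p.2)}.
  exact: continuous_subspaceT.
have [M HM] := @bnd_within _ R (Y `*` [set: U0]) (fun p => k p.1 p.2)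
  (compact_setX hYc hUc) cs.
exists `|M|; split => // y a Yy; apply: (le_trans _ (ler_norm M)).
exact: (HM (y, a)).
Qed.

Definition Sset T y := [set \sum_(t < T) k (traj y u t) (u t) | u in adm T y].
Definition W T y := inf (Sset T y).
Lemma VTE T y : VT Y U f k T y = T%:R^-1 * W T y. Proof. by []. Qed.

Lemma sum_lb (K : R) T y u : (forall y a, Y y -> `|k y a| <= K) -> Y y -> adm T y u ->
  - (T%:R * K) <= \sum_(t < T) k (traj y u t) (u t).
Proof.
move=> HK Yy ad.
have -> : - (T%:R * K) = \sum_(t < T) (- K).
  by rewrite sumr_const card_ord mulNrn mulr_natl.
apply: ler_sum => t _.
have := HK (traj y u t) (u t) (adm_Y Yy ad (ltnW (ltn_ord t))).
by rewrite ler_norml => /andP[].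
Qed.

Lemma S_ne T y : Y y -> Sset T y !=set0.
Proof.
move=> Yy; have [u Hu] := exists_path Yy.
by exists (\sum_(t < T) k (traj y u t) (u t)), u => // t _; have [] := Hu t.
Qed.

Lemma S_lb T y : Y y -> has_lbound (Sset T y).
Proof.
move=> Yy; have [K [_ HK]] := kbound.
by exists (- (T%:R * K)) => _ [u ad <-]; exact: sum_lb.
Qed.

Lemma W_le T y u : Y y -> adm T y u -> W T y <= \sum_(t < T) k (traj y u t) (u t).
Proof. by move=> Yy ad; apply: ge_inf; [exact: S_lb | exists u]. Qed.

Lemma le_W T y x : Y y ->
  (forall u, adm T y u -> x <= \sum_(t < T) k (traj y u t) (u t)) -> x <= W T y.
Proof. by move=> Yy H; apply: lb_le_inf; [exact: S_ne | move=> _ [u ad <-]; exact: H]. Qed.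

Lemma W_cons T y a : Y y -> Aset Y U f y a -> W T.+1 y <= k y a + W T (f y a).
Proof.
move=> Yy [Ua Yf]; rewrite -lerBlDl; apply: le_W => // u' ad'.
rewrite lerBlDl; apply: (le_trans (W_le (u := ucons a u') Yy _)).
  case=> [_|t tT]; first by split.
  by rewrite traj_cons; exact: ad'.
rewrite big_ord_recl lerD2l; apply: ler_sum => i _.
by have -> : nat_of_ord (lift ord0 i) = i.+1 by []; rewrite traj_cons.
Qed.

Variable V : 'rV[R]_m -> R.
Hypothesis hV : forall y, Y y -> (fun T : nat => VT Y U f k T y) @ \oo --> V y.
Hypothesis hVc : {within Y, continuous V}.

Lemma WE T y : (0 < T)%N -> W T y = T%:R * VT Y U f k T y.
Proof.
by move=> T0; rewrite VTE mulrA mulfV ?mul1r // pnatr_eq0 -lt0n.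
Qed.

Lemma V_mono y a : Y y -> Aset Y U f y a -> V y <= V (f y a).
Proof.
move=> Yy Aya; have [Ua Yz] := Aya.
rewrite leNgt; apply/negP => lt.
set th := (V y - V (f y a)) / 4.
have th0 : 0 < th by rewrite divr_gt0 // subr_gt0.
have [N1 H1] := cvg_eps (hV Yy) th0.
have [N2 H2] := cvg_eps (hV Yz) th0.
have [K [K0 HK]] := kbound.
have [N3 H3] := archi_ex ((K + `|V y|) / th).
set T := (N1 + N2 + N3).+1.
have h1 := H1 T.+1 ltac:(rewrite /T; lia).
have h2 := H2 T ltac:(rewrite /T; lia).
have h3 := H3 T ltac:(rewrite /T; lia).
have hw := W_cons T Yy Aya.
rewrite (WE _ (ltn0Sn _)) (WE (f y a) (ltn0Sn _)) -/T in hw.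
have hky := HK y a Yy.
move: h3; rewrite ltr_pdivrMr // => h3.
have t1 : 1 <= T%:R :> R by rewrite ler1n /T.
move: h1 h2 hky; rewrite !ltr_norml ler_norml => /andP[h1 h1'] /andP[h2 h2'] /andP[hk1 hk2].
move: hw h3 t1; rewrite -natr1.
set t := T%:R; set v1 := VT Y U f k T.+1 y in h1 h1' *; set v2 := VT Y U f k T (f y a) in h2 h2' *.
move=> hw h3 t1.
have e4 : V y - V (f y a) = 4 * th by rewrite /th mulrC divfK.
have := ler_norm (V y) => hn.
have hn' : - V y <= `|V y| by rewrite -normrN ler_norm.
have t0 : 0 < t by lra.
have p1 : t * (V y - th) <= t * v1 by rewrite ler_pM2l //; lra.
have p2 : t * v2 <= t * (V (f y a) + th) by rewrite ler_pM2l //; lra.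
have p3 : t * V (f y a) = t * V y - 4 * (t * th).
  have e5 : V (f y a) = V y - 4 * th by lra.
  by rewrite e5; ring.
have p4 : th <= t * th by rewrite ler_peMl //; lra.
move: p1 p2 hw; rewrite !mulrDr !mulrN p3 mulrDl mul1r => p1 p2 hw.
lra.
Qed.

Lemma adm_S T y u : adm T.+1 y u -> adm T y u.
Proof. by move=> ad t tT; apply: ad; exact: ltnW. Qed.

Lemma feas_psi y0 mu psi eta T u : Y y0 -> dual_feasible Y U f k y0 mu psi eta ->
  adm T y0 u -> forall t, (t <= T)%N -> psi y0 <= psi (traj y0 u t).
Proof.
move=> Yy0 [_ [_ H]] ad; elim=> [_|t IH tT]; first by [].
have Yt := adm_Y Yy0 ad (ltnW tT).
have [_ ] := H (traj y0 u t, u t) (conj Yt (ad t tT)).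
rewrite subr_ge0 /= => h; exact: le_trans (IH (ltnW tT)) h.
Qed.

Lemma feas_sum y0 mu psi eta T u : Y y0 -> dual_feasible Y U f k y0 mu psi eta ->
  adm T y0 u ->
  T%:R * mu + eta y0 - eta (traj y0 u T) <= \sum_(t < T) k (traj y0 u t) (u t).
Proof.
move=> Yy0 fe; elim: T => [_|T IH ad]; first by rewrite big_ord0 mul0r add0r subrr.
rewrite big_ord_recr /=.
have := IH (adm_S ad) => {}IH.
have Yt := adm_Y Yy0 ad (leqnSn T).
have [_ [_ H]] := fe.
have [h _] := H (traj y0 u T, u T) (conj Yt (ad T (ltnSn T))).
have hp := feas_psi Yy0 fe ad (leqnSn T).
move: h hp IH; rewrite /= -trajS -natr1.
set a := psi (traj y0 u T); set b := eta (traj y0 u T.+1); set c := eta (traj y0 u T).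
set kk := k (traj y0 u T) (u T); set S := \sum_(i < T) _.
move=> h hp IH.
rewrite mulrDl mul1r; lra.
Qed.

Lemma feas_le y0 mu psi eta : Y y0 -> dual_feasible Y U f k y0 mu psi eta -> mu <= V y0.
Proof.
move=> Yy0 fe; have [_ [ce _]] := fe.
have [M HM] := bnd_within hYc ce.
rewrite leNgt; apply/negP => lt.
set th := (mu - V y0) / 2.
have th0 : 0 < th by rewrite divr_gt0 // subr_gt0.
have [N1 H1] := cvg_eps (hV Yy0) th0.
have [N3 H3] := archi_ex ((2 * M) / th).
set T := (N1 + N3).+1.
have h1 := H1 T ltac:(rewrite /T; lia).
have h3 := H3 T ltac:(rewrite /T; lia).
have hw : T%:R * mu - 2 * M <= W T y0.
  apply: le_W => // u ad.
  apply: le_trans (feas_sum Yy0 fe ad).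
  have := HM y0 Yy0; have := HM _ (adm_Y Yy0 ad (leqnn T)).
  rewrite !ler_norml => /andP[? ?] /andP[? ?]; lra.
rewrite (WE _ (ltn0Sn _)) -/T in hw.
move: h3; rewrite ltr_pdivrMr // => h3.
have t1 : 1 <= T%:R :> R by rewrite ler1n /T.
move: h1; rewrite ltr_norml => /andP[h1 h1'].
move: hw h3 t1.
set t := T%:R; set v1 := VT Y U f k T y0 in h1 h1' *.
move=> hw h3 t1.
have t0 : 0 < t by lra.
have p1 : t * v1 <= t * (V y0 + th) by rewrite ler_pM2l //; lra.
have p3 : t * mu = t * V y0 + 2 * (t * th).
  have e5 : mu = V y0 + 2 * th by rewrite /th mulrC divfK //; lra.
  by rewrite e5; ring.
move: p1 hw; rewrite !mulrDr p3 => p1 hw.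
lra.
Qed.

Local Notation P := ('rV[R]_m * U0)%type.
Local Notation G := (Gset Y U f).

Definition cst (eps : R) (p : P) := k p.1 p.2 - V p.1 + eps.
Definition ppath (d : R) (N : nat) (s : nat -> P) : Prop :=
  (forall t, (t < N)%N -> G (s t)) /\
  (forall t, (t.+1 < N)%N -> `|(s t.+1).1 - f (s t).1 (s t).2| <= d).
Definition Eset eps d L y := [set L * `|(NS.2 0%N).1 - y| + \sum_(t < NS.1) cst eps (NS.2 t)
   | NS in [set NS : nat * (nat -> P) | ppath d NS.1 NS.2]].
Definition eta_f eps d L y := inf (Eset eps d L y).

Lemma U0_inhab : exists u1 : U0, True.
Proof. by have [y1 Yy1] := hY0; have [u1 _] := hA Yy1; exists u1. Qed.

Section EtaC.
Variables (eps d B L : R).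
Hypothesis L0 : 0 <= L.
Hypothesis hNB : forall N s, ppath d N s -> - B <= \sum_(t < N) cst eps (s t).

Lemma E_ne y : Eset eps d L y !=set0.
Proof.
have [u1 _] := U0_inhab.
exists (L * `|y - y| + \sum_(t < 0) cst eps ((fun _ => (y, u1)) t)).
by exists (0%N, fun _ => (y, u1)) => //; split.
Qed.

Lemma E_lb y : lbound (Eset eps d L y) (- B).
Proof.
move=> _ [[N s] pp <-] /=; have := hNB pp.
have : 0 <= L * `|(s 0%N).1 - y| by rewrite mulr_ge0.
lra.
Qed.

Lemma eta_le0 y : eta_f eps d L y <= 0.
Proof.
have [u1 _] := U0_inhab.
have hx : Eset eps d L y (L * `|y - y| + \sum_(t < 0) cst eps ((fun _ => (y, u1)) t)).
  by exists (0%N, fun _ => (y, u1)) => //; split.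
have lb : has_lbound (Eset eps d L y) by exists (- B); exact: E_lb.
have := ge_inf lb hx.
by rewrite subrr normr0 mulr0 big_ord0 addr0.
Qed.

Lemma eta_ge y : - B <= eta_f eps d L y.
Proof. by apply: lb_le_inf; [exact: E_ne | exact: E_lb]. Qed.

Lemma eta_lip y z : eta_f eps d L y <= eta_f eps d L z + L * `|y - z|.
Proof.
rewrite -lerBlDr; apply: lb_le_inf; first exact: E_ne.
move=> _ [[N s] pp <-] /=; rewrite lerBlDr.
apply: le_trans (ge_inf (x := L * `|(s 0%N).1 - y| + \sum_(t < N) cst eps (s t)) _ _) _.
- by exists (- B); exact: E_lb.
- by exists (N, s).
have := ler_distD z (s 0%N).1 y.
rewrite (distrC z y) => h.
have := ler_wpM2l L0 h; rewrite mulrDr; lra.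
Qed.

Lemma eta_cont : continuous (eta_f eps d L).
Proof. exact: (lip_cont L0 eta_lip). Qed.

Variable Kc : R.
Hypothesis hKc : forall p, G p -> `|cst eps p| <= Kc.
Hypothesis hL : B + Kc <= L * d.

Lemma eta_bell p : G p -> eta_f eps d L p.1 <= cst eps p + eta_f eps d L (f p.1 p.2).
Proof.
move=> Gp; rewrite -lerBlDl; apply: lb_le_inf; first exact: E_ne.
move=> _ [[N s] pp <-] /=; rewrite lerBlDl.
have lb : has_lbound (Eset eps d L p.1) by exists (- B); exact: E_lb.
have hS : - B <= \sum_(t < N) cst eps (s t) := hNB pp.
have hLn : 0 <= L * `|(s 0%N).1 - f p.1 p.2| by rewrite mulr_ge0.
case: (lerP `|(s 0%N).1 - f p.1 p.2| d) => hd.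
  pose s' := fun t => if t is t'.+1 then s t' else p.
  have pp' : ppath d N.+1 s'.
    split; first by case=> [_|t tN]; [exact: Gp | exact: pp.1 t tN].
    by case=> [_|t tN] /=; [exact: hd | exact: pp.2 t tN].
  have hx : Eset eps d L p.1
     (L * `|(s' 0%N).1 - p.1| + \sum_(t < N.+1) cst eps (s' t)) by exists (N.+1, s').
  have := ge_inf lb hx.
  rewrite /= subrr normr0 mulr0 add0r big_ord_recl /=.
  lra.
have := eta_le0 p.1.
have hk1 := hKc Gp; move: hk1; rewrite ler_norml => /andP[hk1 _].
have : L * d <= L * `|(s 0%N).1 - f p.1 p.2| by rewrite ler_wpM2l // ltW.
move=> h1 h2.
have h3 : 0 <= cst eps p + (L * `|(s 0%N).1 - f p.1 p.2| + \sum_(t < N) cst eps (s t)) by have e1 := le_trans hL h1; lra.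
exact: le_trans h2 h3.
Qed.

End EtaC.

Lemma cst_bound eps : 0 <= eps -> exists Kc, 0 <= Kc /\ forall p, Y p.1 -> `|cst eps p| <= Kc.
Proof.
move=> e0; have [K [K0 HK]] := kbound.
have [MV HMV] := bnd_within hYc hVc.
exists (K + `|MV| + eps); split; first by rewrite !addr_ge0.
move=> p Yp; rewrite /cst.
have h1 := HK p.1 p.2 Yp; have h2 := HMV _ Yp.
have h3 := ler_norm MV.
move: h1 h2; rewrite !ler_norml => /andP[? ?] /andP[? ?].
apply/andP; split; lra.
Qed.

Lemma no_bad_traj eps (q : nat -> P) : 0 < eps -> (forall t, G (q t)) ->
  (forall t, (q t.+1).1 = f (q t).1 (q t).2) ->
  (forall j, \sum_(t < j) cst eps (q t) <= 0) -> False.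
Proof.
move=> e0 Gq hq hS.
have mono t : V (q t).1 <= V (q t.+1).1.
  by rewrite hq; have [Yq Aq] := Gq t; exact: V_mono.
have [MV HMV] := bnd_within hYc hVc.
set Vs := [set V (q t).1 | t in [set: nat]].
have hub : has_ubound Vs.
  exists MV => _ [t _ <-]; apply: le_trans (ler_norm _) _.
  by apply: HMV; have [] := Gq t.
have hs : has_sup Vs by split => //; exists (V (q 0%N).1), 0%N.
have th0 : 0 < eps / 4 by rewrite divr_gt0.
have [_ [s _ <-] hsup] := sup_adherent th0 hs.
set Ls := sup Vs in hsup.
have ub t : V (q t).1 <= Ls by apply: ub_le_sup => //; exists t.
have [Kc [Kc0 HKc]] := cst_bound (ltW e0).
set u := fun t => (q (s + t)%N).2.
have Ys : Y (q s).1 by have [] := Gq s.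
have tr t : traj (q s).1 u t = (q (s + t)%N).1.
  elim: t => [|t IH]; first by rewrite addn0.
  by rewrite trajS IH addnS hq.
have ad n : adm n (q s).1 u.
  by move=> t _; rewrite tr; have [] := Gq (s + t)%N.
have hW n : W n (q s).1 <= s%:R * Kc + n%:R * (Ls - eps).
  apply: le_trans (W_le Ys (ad n)) _.
  have hsplit := hS (s + n)%N; rewrite (sum_split (fun t => cst eps (q t))) in hsplit.
  have hlow : - (s%:R * Kc) <= \sum_(t < s) cst eps (q t).
    have -> : - (s%:R * Kc) = \sum_(t < s) (- Kc).
      by rewrite sumr_const card_ord mulNrn mulr_natl.
    apply: ler_sum => t _; have := HKc (q t) (Gq t).1.
    by rewrite ler_norml => /andP[].
  have hkk : \sum_(t < n) k (traj (q s).1 u t) (u t) <=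
      \sum_(t < n) (cst eps (q (s + t)%N) + (Ls - eps)).
    apply: ler_sum => t _; rewrite tr /cst /u.
    have := ub (s + t)%N; lra.
  apply: le_trans hkk _; rewrite big_split /= sumr_const card_ord -mulr_natl.
  lra.
have [N1 H1] := cvg_eps (hV Ys) th0.
have [N3 H3] := archi_ex ((2 * (s%:R * Kc)) / eps).
set T := (N1 + N3).+1.
have h1 := H1 T ltac:(rewrite /T; lia).
have h3 := H3 T ltac:(rewrite /T; lia).
have hw := hW T.
rewrite (WE _ (ltn0Sn _)) -/T in hw.
move: h3; rewrite ltr_pdivrMr // => h3.
have t1 : 1 <= T%:R :> R by rewrite ler1n /T.
move: h1; rewrite ltr_norml => /andP[h1 h1'].
move: hw h3 t1.
set t := T%:R; set v1 := VT Y U f k T (q s).1 in h1 h1' *.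
set C := s%:R * Kc.
move=> hw h3 t1.
have t0 : 0 < t by lra.
have p1 : t * (Ls - eps / 2) <= t * v1.
  by rewrite ler_pM2l //; lra.
have p2 : t * (Ls - eps / 2) = t * Ls - (t * eps) / 2 by ring.
have p3 : t * (Ls - eps) = t * Ls - t * eps by ring.
lra.
Qed.

Hypothesis hH : hausdorff_space U0.
Hypothesis hUy : forall y, Y y -> compact (U y).
Hypothesis husc : usc_on Y U.
Hypothesis hf : continuous (fun p : 'rV[R]_m * U0 => f p.1 p.2).

Lemma nbhs_X (p : P) A B : nbhs p.1 A -> nbhs p.2 B -> nbhs p (A `*` B).
Proof. by move=> hA' hB; exists (A, B). Qed.

Lemma G_closed : closed G.
Proof.
move=> [y u] clp.
have Ycl : closed Y := compact_closed (@norm_hausdorff _ _) hYc.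
have Yy : Y y.
  apply: Ycl => B nB.
  have [q [[Yq _] [Bq _]]] := clp _ (nbhs_X (p := (y, u)) nB (@filterT _ (nbhs u) _)).
  by exists q.1.
have Yf : Y (f y u).
  apply: Ycl => B nB.
  have nB' : nbhs ((y, u) : P) ((fun p : P => f p.1 p.2) @^-1` B) := @hf (y, u) B nB.
  have [q [[_ [_ Yq]] Bq]] := clp _ nB'.
  by exists (f q.1 q.2).
split=> //; split=> //=.
apply: contrapT => nU.
have Ucl : closed (U y) := compact_closed hH (hUy Yy).
have nW : nbhs u (~` U y) by apply: open_nbhs_nbhs; split => //; exact: closed_openC.
have [B nB clB] := (@uniform_regular U0 u) _ nW.
have oO : open (~` closure B) by apply: closed_openC; exact: closed_closure.
have UO : U y `<=` ~` closure B by move=> z Uz /clB.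
have := husc Yy oO UO => nA.
have [q [[Yq [Uq _]] [Aq Bq]]] := clp _ (nbhs_X (p := (y, u)) nA nB).
by have := Aq Yq _ Uq; apply; exact: subset_closure.
Qed.

Lemma G_compact : compact G.
Proof.
apply: (subclosed_compact G_closed (compact_setX hYc hUc)).
by move=> p [Yp _]; split.
Qed.

Lemma V_near y (th : R) : Y y -> 0 < th -> nbhs y [set z | Y z -> `|V y - V z| < th].
Proof.
move=> Yy th0; have := @hVc y; move/cvgr_dist_lt => /(_ th th0).
move=> H.
have H' : nbhs_subspace (A := Y) y [set t | `|V y - V t| < th] := H.
rewrite -(nbhs_subspace_in Yy) in H'.
move: H'; rewrite /within /=; apply: filterS => z hz Yz; exact: hz.
Qed.

Lemma k_near (p : P) (th : R) : 0 < th -> nbhs p [set p' : P | `|k p.1 p.2 - k p'.1 p'.2| < th].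
Proof.
move=> th0; have := @hk p.
move/cvgr_dist_lt => /(_ th th0) //.
Qed.

Definition PT := prod_topology (fun _ : nat => P).

Lemma proj_nbhs (q : PT) i (B : set P) : nbhs (q i) B -> nbhs q [set x : PT | B (x i)].
Proof. exact: (@proj_continuous nat (fun _ => P) i q B). Qed.

Lemma nbhsI_P (p : P) A B : nbhs p A -> nbhs p B -> nbhs p (A `&` B).
Proof. exact: (@filterI _ (nbhs p) (nbhs_filter p) A B). Qed.

Lemma nbhsI_PT (p : PT) A B : nbhs p A -> nbhs p B -> nbhs p (A `&` B).
Proof. exact: (@filterI _ (nbhs p) (nbhs_filter p) A B). Qed.

Lemma paths_compact : compact [set g : PT | forall i, G (g i)].
Proof. exact: (@tychonoff nat (fun _ => P) (fun _ => G) (fun _ => G_compact)). Qed.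

Lemma G_ne : exists p, G p.
Proof.
by have [y1 Yy1] := hY0; have [u1 hu1] := hA Yy1; exists (y1, u1).
Qed.

Lemma good_path eps (Kc : R) n : 0 <= Kc -> (forall p, G p -> `|cst eps p| <= Kc) ->
  (exists N s, ppath (n.+1%:R^-1) N s /\
       \sum_(t < N) cst eps (s t) < - (n%:R * (Kc + 1))) ->
  exists s : nat -> P, (forall t, G (s t)) /\
    (forall t, (t.+1 < n)%N -> `|(s t.+1).1 - f (s t).1 (s t).2| <= n.+1%:R^-1) /\
    (forall j, (j <= n)%N -> \sum_(t < j) cst eps (s t) <= 0).
Proof.
move=> Kc0 HKc [N [s0 [[pG pg] hsum]]].
have [pstar Gps] := G_ne.
set S := fun j => \sum_(t < j) cst eps (s0 t).
have [j0 [j0N hmax]] := max_idx S N.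
have S0 : 0 <= S j0 by apply: le_trans (hmax 0%N (leq0n _)); rewrite /S big_ord0.
have split_S j : (j0 + j <= N)%N -> S (j0 + j)%N = S j0 + \sum_(t < j) cst eps (s0 (j0 + t)%N).
  by move=> _; rewrite /S (sum_split (fun t => cst eps (s0 t))).
have hlen : (n < N - j0)%N.
  rewrite ltnNge; apply/negP => hle.
  have eN : N = (j0 + (N - j0))%N by rewrite subnKC.
  have := split_S (N - j0)%N; rewrite -eN => /(_ (leqnn N)) hS.
  have lb : - ((N - j0)%:R * Kc) <= \sum_(t < N - j0) cst eps (s0 (j0 + t)%N).
    have -> : - ((N - j0)%:R * Kc) = \sum_(t < N - j0) (- Kc).
      by rewrite sumr_const card_ord mulNrn mulr_natl.
    apply: ler_sum => t _; have := HKc _ (pG (j0 + t)%N _).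
    by rewrite ler_norml -ltn_subRL => /(_ (ltn_ord t)) /andP[].
  have hm : (N - j0)%:R * Kc <= n%:R * Kc by rewrite ler_wpM2r // ler_nat.
  have hn0 : 0 <= n%:R :> R by [].
  move: hsum; rewrite -/(S N) hS mulrDr mulr1; lra.
pose s t := if (j0 + t < N)%N then s0 (j0 + t)%N else pstar.
exists s; split; first by move=> t; rewrite /s; case: ifP => // h; exact: pG.
split.
  move=> t tn; rewrite /s !ifT; try lia.
  by rewrite addnS; apply: pg; lia.
move=> j jn.
have -> : \sum_(t < j) cst eps (s t) = \sum_(t < j) cst eps (s0 (j0 + t)%N).
  apply: eq_bigr => t _; rewrite /s ifT //.
  have := ltn_ord t; lia.
have := hmax (j0 + j)%N ltac:(lia).
rewrite split_S; last by lia.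
lra.
Qed.

Lemma NB eps : 0 < eps -> exists d B, 0 < d /\ 0 <= B /\
  forall N s, ppath d N s -> - B <= \sum_(t < N) cst eps (s t).
Proof.
move=> e0; have [Kc [Kc0 HKc0]] := cst_bound (ltW e0).
have HKc p : G p -> `|cst eps p| <= Kc by move=> [Yp _]; exact: HKc0.
apply: contrapT => nNB.
have bad n : exists N s, ppath (n.+1%:R^-1) N s /\
       \sum_(t < N) cst eps (s t) < - (n%:R * (Kc + 1)).
  apply: contrapT => hn; apply: nNB.
  exists n.+1%:R^-1, (n%:R * (Kc + 1)); split; first by rewrite invr_gt0 ltr0n.
  split; first by rewrite mulr_ge0 // addr_ge0.
  move=> N s pp; rewrite leNgt; apply/negP => lt; apply: hn.
  by exists N, s.
have good n := good_path Kc0 HKc (bad n).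
have [xs Hxs] := choice good.
pose xs' : nat -> PT := xs.
have Fg : (xs' @ \oo) [set g : PT | forall i, G (g i)].
  by exists 0%N => // n _; exact: (Hxs n).1.
have [q [Gq clq]] := @paths_compact (xs' @ \oo) _ Fg.
have hq t : (q t.+1).1 = f (q t).1 (q t).2.
  have h0 : `|(q t.+1).1 - f (q t).1 (q t).2| <= 0.
    apply: (@cluster_le R PT xs' q (fun x : PT => `|(x t.+1).1 - f (x t).1 (x t).2|)
               (fun _ => True) 0 clq).
    - move=> th th0; have th2 : 0 < th / 2 by rewrite divr_gt0.
      have N1 : nbhs (q t.+1) (fst @^-1` [set z | `|(q t.+1).1 - z| < th / 2]).
        have := nbhs_X (p := q t.+1) (@nbhs_ballN R _ (q t.+1).1 _ th2)
          (@filterT _ (nbhs (q t.+1).2) (nbhs_filter _)).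
        by apply: filterS => p [].
      have N2 : nbhs (q t) ((fun p : P => f p.1 p.2) @^-1`
                   [set z | `|f (q t).1 (q t).2 - z| < th / 2]).
        exact: (@hf (q t) _ (@nbhs_ballN R _ (f (q t).1 (q t).2) _ th2)).
      have M1 := proj_nbhs N1.
      have M2 := proj_nbhs N2.
      apply: filterS (filterI M1 M2) => x [/= h1 h2] _.
      have e1 := ler_distD (x t.+1).1 (q t.+1).1 (f (q t).1 (q t).2).
      have e2 := ler_distD (f (x t).1 (x t).2) (x t.+1).1 (f (q t).1 (q t).2).
      rewrite (distrC (f (x t).1 (x t).2)) in e2.
      have : th / 2 + th / 2 = th by rewrite -splitr.
      lra.
    - move=> th th0; have [N HN] := inv_small th0.
      exists (maxn N t.+2) => // n /= hn; split => //.
      rewrite add0r; apply: le_trans (HN n _); last by lia.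
      by apply: (Hxs n).2.1; lia.
  by apply/eqP; rewrite -subr_eq0 -normr_le0.
have near_sum j : forall th, 0 < th -> nbhs q [set x : PT | (forall i, G (x i)) ->
    `|\sum_(t < j) cst eps (q t) - \sum_(t < j) cst eps (x t)| < th].
  elim: j => [|j IH] th th0.
    by apply: filterS (@filterT _ (nbhs q) _) => x _ _; rewrite !big_ord0 subrr normr0.
  have th2 : 0 < th / 2 by rewrite divr_gt0.
  have th4 : 0 < th / 4 by rewrite divr_gt0.
  have Yq : Y (q j).1 by have [] := Gq j.
  have N1 : nbhs (q j) (fst @^-1` [set z | Y z -> `|V (q j).1 - V z| < th / 4]).
    have := nbhs_X (p := q j) (V_near Yq th4) (@filterT _ (nbhs (q j).2) (nbhs_filter _)).
    by apply: filterS => p [].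
  have N2 := k_near (q j) th4.
  have M1 := proj_nbhs (nbhsI_P N1 N2).
  have M := nbhsI_PT M1 (IH _ th2).
  apply: (@filterS _ (nbhs q) (nbhs_filter q) _ _ _ M) => x [/= [h1 h2] h3] Gx.
  have := h3 Gx; have [Yx _] := Gx j; have := h1 Yx.
  rewrite !big_ord_recr /= /cst.
  set a := \sum_(i < j) _; set b := \sum_(i < j) _.
  move: h2; set k1 := k (q j).1 (q j).2; set k2 := k (x j).1 (x j).2.
  move=> h2 h1' h3'.
  have e1 : th / 4 + th / 4 = th / 2 by lra.
  have : th / 2 + th / 2 = th by rewrite -splitr.
  move: h2 h1' h3'; rewrite !ltr_norml => /andP[? ?] /andP[? ?] /andP[? ?].
  move=> ?; apply/andP; split; lra.
have hS j : \sum_(t < j) cst eps (q t) <= 0.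
  apply: (@cluster_le R PT xs' q (fun x : PT => \sum_(t < j) cst eps (x t))
             (fun x : PT => forall i, G (x i)) 0 clq).
  - move=> th th0; apply: filterS (near_sum j th th0) => x h Gx.
    have := h Gx; rewrite ltr_norml => /andP[? ?]; lra.
  - move=> th th0; exists j => // n /= jn; split; first exact: (Hxs n).1.
    by apply: le_trans ((Hxs n).2.2 j jn) _; rewrite add0r ltW.
exact: (no_bad_traj e0 Gq hq hS).
Qed.

Lemma eta_exists eps : 0 < eps -> exists eta : 'rV[R]_m -> R, continuous eta /\
  forall p, G p -> 0 <= cst eps p + eta (f p.1 p.2) - eta p.1.
Proof.
move=> e0; have [d [B [d0 [B0 hNB]]]] := NB e0.
have [Kc [Kc0 HKc0]] := cst_bound (ltW e0).
have HKc p : G p -> `|cst eps p| <= Kc by move=> [Yp _]; exact: HKc0.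
pose L := (B + Kc) / d.
have L0 : 0 <= L by rewrite divr_ge0 // ?addr_ge0 // ltW.
have hL : B + Kc <= L * d by rewrite /L divfK // gt_eqF.
exists (eta_f eps d L); split; first exact: (eta_cont L0 hNB).
move=> p Gp; have := eta_bell L0 hNB HKc hL Gp; lra.
Qed.

Lemma wc_near (g : 'rV[R]_m -> R) y (th : R) : {within Y, continuous g} -> Y y -> 0 < th ->
  nbhs y [set z | Y z -> `|g y - g z| < th].
Proof.
move=> gc Yy th0; have := @gc y; move/cvgr_dist_lt => /(_ th th0).
move=> H.
have H' : nbhs_subspace (A := Y) y [set t | `|g y - g t| < th] := H.
rewrite -(nbhs_subspace_in Yy) in H'.
move: H'; rewrite /within /=; apply: filterS => z hz Yz; exact: hz.
Qed.

Lemma min_attained (psi eta : 'rV[R]_m -> R) :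
  {within Y, continuous psi} -> {within Y, continuous eta} ->
  exists2 p, G p & forall p', G p' ->
    k p.1 p.2 - psi p.1 + eta (f p.1 p.2) - eta p.1 <=
    k p'.1 p'.2 - psi p'.1 + eta (f p'.1 p'.2) - eta p'.1.
Proof.
move=> cpsi ceta.
set g := fun p : P => k p.1 p.2 - psi p.1 + eta (f p.1 p.2) - eta p.1.
have [K [K0 HK]] := kbound.
have [M1 HM1] := bnd_within hYc cpsi.
have [M2 HM2] := bnd_within hYc ceta.
set gs := [set g p | p in G].
have hlb : has_lbound gs.
  exists (- (K + M1 + 2 * M2)) => _ [p [Yp [_ Yf]] <-].
  have := HK p.1 p.2 Yp; have := HM1 _ Yp; have := HM2 _ Yp; have := HM2 _ Yf.
  rewrite /g !ler_norml => /andP[? ?] /andP[? ?] /andP[? ?] /andP[? ?]; lra.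
have [p0 Gp0] := G_ne.
have hinf : has_inf gs by split => //; exists (g p0), p0.
have seq n : exists p, G p /\ g p < inf gs + n.+1%:R^-1.
  have e : 0 < n.+1%:R^-1 :> R by rewrite invr_gt0 ltr0Sn.
  have [_ [p Gp <-] hp] := inf_adherent e hinf.
  by exists p.
have [ps Hps] := choice seq.
have Fg : (ps @ \oo) G by exists 0%N => // n _; exact: (Hps n).1.
have [p [Gp clp]] := G_compact _ Fg.
exists p => // p' Gp'.
apply: le_trans (ge_inf hlb (ex_intro2 _ _ p' Gp' erefl)).
apply: (@cluster_le R _ ps p g G (inf gs) clp).
- move=> th th0; have th4 : 0 < th / 4 by rewrite divr_gt0.
  have [Yp [_ Yf]] := Gp.
  have N1 := k_near p th4.
  have N2 : nbhs p (fst @^-1` [set z | Y z -> `|psi p.1 - psi z| < th / 4]).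
    have := nbhs_X (p := p) (wc_near cpsi Yp th4) (@filterT _ (nbhs p.2) (nbhs_filter _)).
    by apply: filterS => x [].
  have N3 : nbhs p (fst @^-1` [set z | Y z -> `|eta p.1 - eta z| < th / 4]).
    have := nbhs_X (p := p) (wc_near ceta Yp th4) (@filterT _ (nbhs p.2) (nbhs_filter _)).
    by apply: filterS => x [].
  have N4 : nbhs p ((fun x : P => f x.1 x.2) @^-1`
                [set z | Y z -> `|eta (f p.1 p.2) - eta z| < th / 4]).
    exact: (@hf p _ (wc_near ceta Yf th4)).
  apply: filterS (nbhsI_P (nbhsI_P N1 N2) (nbhsI_P N3 N4)) => x [[/= h1 h2] [h3 h4]] Gx.
  have [Yx [_ Yfx]] := Gx.
  move: h1 (h2 Yx) (h3 Yx) (h4 Yfx); rewrite /g !ltr_norml.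
  move=> /andP[? ?] /andP[? ?] /andP[? ?] /andP[? ?]; lra.
- move=> th th0; have [N HN] := inv_small th0.
  exists N => // n /= Nn; split; first exact: (Hps n).1.
  by apply: ltW; apply: (lt_le_trans (Hps n).2); rewrite lerD2l; exact: HN.
Qed.

Lemma dstarE y0 : Y y0 -> dstar Y U f k y0 = (V y0)%:E.
Proof.
move=> Yy0; apply/eqP; rewrite eq_le; apply/andP; split.
  apply: ge_ereal_sup => _ [mu [psi [eta fe]] <-].
  by rewrite lee_fin; exact: feas_le fe.
have H e : 0 < e -> ((V y0 - e)%:E <= dstar Y U f k y0)%E.
  move=> e0; apply: ereal_sup_ubound; exists (V y0 - e) => //.
  have [eta [ceta heta]] := eta_exists e0.
  exists V, eta; split; first exact: hVc.
  split; first exact: continuous_subspaceT.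
  move=> p Gp; split.
    by have := heta p Gp; rewrite /cst; lra.
  by have [Yp Ap] := Gp; rewrite subr_ge0; exact: V_mono.
case E: (dstar Y U f k y0) => [r| |] in H *.
- rewrite lee_fin; apply/ler_addgt0Pr => e e0.
  by have := H e e0; rewrite lee_fin; lra.
- by rewrite leey.
- by have := H 1 ltr01.
Qed.

Lemma main y0 : Y y0 ->
  (forall psi eta : 'rV[R]_m -> R,
      {within Y, continuous psi} -> {within Y, continuous eta} ->
      (dual_optimal Y U f k y0 psi eta <->
        ((forall p, Gset Y U f p -> 0 <= psi (f p.1 p.2) - psi p.1) /\
         is_min_on (Gset Y U f)
           (fun p => k p.1 p.2 - psi p.1 + eta (f p.1 p.2) - eta p.1)
           (V y0 - psi y0)))) /\
  (forall eta : 'rV[R]_m -> R, {within Y, continuous eta} ->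
      is_min_on (Gset Y U f)
        (fun p => k p.1 p.2 - V p.1 + eta (f p.1 p.2) - eta p.1) 0 ->
      dual_optimal Y U f k y0 V eta).
Proof.
move=> Yy0; have dE := dstarE Yy0.
split.
  move=> psi eta cpsi ceta; split.
    move=> opt.
    have lo p : G p -> V y0 - psi y0 <= k p.1 p.2 - psi p.1 + eta (f p.1 p.2) - eta p.1.
      by move=> Gp; have [h _] := opt p Gp; move: h; rewrite dE lee_fin; lra.
    split; first by move=> p Gp; have [_ h] := opt p Gp.
    split => //.
    have [p Gp hp] := min_attained cpsi ceta.
    exists p => //.
    set mu := k p.1 p.2 - psi p.1 + eta (f p.1 p.2) - eta p.1 + psi y0.
    have fe : dual_feasible Y U f k y0 mu psi eta.
      split => //; split => // p' Gp'; split.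
        by have := hp p' Gp'; rewrite /mu; lra.
      by have [_ h] := opt p' Gp'.
    have := feas_le Yy0 fe; have := lo p Gp; rewrite /mu; lra.
  move=> [mono [_ lo]] p Gp; split; last exact: mono.
  by rewrite dE lee_fin; have := lo p Gp; lra.
move=> eta ceta [_ lo] p Gp; split.
  by rewrite dE lee_fin; have := lo p Gp; lra.
by have [Yp Ap] := Gp; rewrite subr_ge0; exact: V_mono.
Qed.

End Prop44.

Unset Implicit Arguments.
Set Strict Implicit.

Theorem proposition4p4 (R : realType) (m : nat) (U0 : pseudoMetricType R)
  (Y : set 'rV[R]_m) (U : 'rV[R]_m -> set U0)
  (f : 'rV[R]_m -> U0 -> 'rV[R]_m) (k : 'rV[R]_m -> U0 -> R)
  (V : 'rV[R]_m -> R) (y0 : 'rV[R]_m) :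
  compact Y -> Y !=set0 ->
  compact [set: U0] -> hausdorff_space U0 ->
  (forall y, Y y -> compact (U y)) -> usc_on Y U ->
  continuous (fun p : 'rV[R]_m * U0 => f p.1 p.2) ->
  continuous (fun p : 'rV[R]_m * U0 => k p.1 p.2) ->
  (forall y, Y y -> Aset Y U f y !=set0) ->
  (forall y, Y y -> (fun T : nat => VT Y U f k T y) @ \oo --> V y) ->
  {within Y, continuous V} ->
  Y y0 ->
  (forall psi eta : 'rV[R]_m -> R,
      {within Y, continuous psi} -> {within Y, continuous eta} ->
      (dual_optimal Y U f k y0 psi eta <->
        ((forall p, Gset Y U f p -> 0 <= psi (f p.1 p.2) - psi p.1) /\
         is_min_on (Gset Y U f)
           (fun p => k p.1 p.2 - psi p.1 + eta (f p.1 p.2) - eta p.1)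
           (V y0 - psi y0)))) /\
  (forall eta : 'rV[R]_m -> R, {within Y, continuous eta} ->
      is_min_on (Gset Y U f)
        (fun p => k p.1 p.2 - V p.1 + eta (f p.1 p.2) - eta p.1) 0 ->
      dual_optimal Y U f k y0 V eta).
Proof.
move=> hYc hY0 hUc hH hUy husc hf hk hA hV hVc Yy0.
by eapply main; eassumption.
Qed.
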